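(* Let $\gamma>0$ and let $\mathcal{L}$ be the qubit Lindbladian with no Hamiltonian part and a single jump operator $L=\sqrt{\gamma}\,|0\rangle\langle 1|$, i.e. $\mathcal{L}(\rho)=L\rho L^\dagger-\frac12\{L^\dagger L,\rho\}$. Then $\mathcal{L}$ is not quantum programmable.
   Context: $\mathcal{L}$ generates the amplitude-damping semigroup $(e^{t\mathcal{L}})_{t\ge0}$. $\mathcal{L}$ is quantum programmable if there exist a finite-dimensional program space $\mathcal{H}_P$, a CPTP map $\mathcal{P}$ from operators on $\mathbb{C}^2\otimes\mathcal{H}_P$ to operators on $\mathbb{C}^2$, and a continuous family of density operators $(\pi_t)_{t\ge0}$ on $\mathcal{H}_P$ such that $\mathcal{P}(\rho\otimes\pi_t)=e^{t\mathcal{L}}(\rho)$ for all $t\ge0$ and all $\rho$. *)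

(* Defs.v *)
From HB Require Import structures.
From mathcomp Require Import all_boot all_order all_algebra.
From mathcomp Require Import complex mxtens.
From mathcomp Require Import all_classical all_reals all_analysis.
Set Implicit Arguments. Unset Strict Implicit. Unset Printing Implicit Defensive.
Import Order.TTheory GRing.Theory Num.Theory.
Import numFieldNormedType.Exports.
Local Open Scope classical_set_scope.
Local Open Scope ring_scope.

Section QDefs.
Variable R : realType.
Local Notation C := (complex R).

Definition adjmx {m n : nat} (A : 'M[C]_(m, n)) : 'M[C]_(n, m) :=
  (map_mx Num.conj A)^T.

(* positive semidefinite: <v, A v> >= 0 for all v (in C, "0 <= z" means
   z is real and nonnegative) *)
Definition psdmx {n : nat} (A : 'M[C]_n) : Prop :=
  forall v : 'cV[C]_n, 0 <= (adjmx v *m A *m v) 0 0.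

Definition density {n : nat} (A : 'M[C]_n) : Prop :=
  psdmx A /\ \tr A = 1.

(* positive semidefiniteness of a k x k block operator matrix with
   blocks in M_m, i.e. of an element of M_k(M_m) = M_k (x) M_m *)
Definition block_psd {k m : nat} (B : 'I_k -> 'I_k -> 'M[C]_m) : Prop :=
  forall v : 'I_k -> 'cV[C]_m,
    0 <= \sum_(i < k) \sum_(j < k) (adjmx (v i) *m B i j *m v j) 0 0.

(* completely positive: id_k (x) P is positive for every k *)
Definition completely_positive {m n : nat} (P : 'M[C]_m -> 'M[C]_n) : Prop :=
  forall (k : nat) (B : 'I_k -> 'I_k -> 'M[C]_m),
    block_psd B -> block_psd (fun i j => P (B i j)).

Definition trace_preserving {m n : nat} (P : 'M[C]_m -> 'M[C]_n) : Prop :=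
  forall X : 'M[C]_m, \tr (P X) = \tr X.

Definition CPTP {m n : nat} (P : 'M[C]_m -> 'M[C]_n) : Prop :=
  linear P /\ completely_positive P /\ trace_preserving P.

Definition lindblad1 {n : nat} (Lj : 'M[C]_n) (rho : 'M[C]_n) : 'M[C]_n :=
  Lj *m rho *m adjmx Lj
  - 2^-1 *: (adjmx Lj *m Lj *m rho + rho *m (adjmx Lj *m Lj)).

Definition ad_jump (gamma : R) : 'M[C]_2 :=
  ((Num.sqrt gamma)%:C)%C *: delta_mx 0 1.

Definition ad_lindbladian (gamma : R) : 'M[C]_2 -> 'M[C]_2 :=
  lindblad1 (ad_jump gamma).

(* Phi is the semigroup (t |-> e^{t L}) generated by the superoperator Lsup:
   the unique solution of Phi 0 = id, d/dt Phi t = Lsup o Phi t. *)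
Definition generated_by {n : nat} (Lsup : 'M[C]_n -> 'M[C]_n)
    (Phi : R -> 'M[C]_n -> 'M[C]_n) : Prop :=
  (forall rho, Phi 0 rho = rho) /\
  (forall (rho : 'M[C]_n) (t : R) (i j : 'I_n),
     is_derive t 1 (fun s => complex.Re (Phi s rho i j))
                   (complex.Re (Lsup (Phi t rho) i j)) /\
     is_derive t 1 (fun s => complex.Im (Phi s rho i j))
                   (complex.Im (Lsup (Phi t rho) i j))).

Definition continuous_on_nonneg {d : nat} (pi : R -> 'M[C]_d) : Prop :=
  forall i j : 'I_d,
    {within (`[0, +oo[ : set R), continuous (fun t : R => complex.Re (pi t i j))} /\
    {within (`[0, +oo[ : set R), continuous (fun t : R => complex.Im (pi t i j))}.

Definition quantum_programmable (Phi : R -> 'M[C]_2 -> 'M[C]_2) : Prop :=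
  exists (d : nat) (P : 'M[C]_(2 * d) -> 'M[C]_2) (pi : R -> 'M[C]_d),
    CPTP P /\
    (forall t, 0 <= t -> density (pi t)) /\
    continuous_on_nonneg pi /\
    (forall t, 0 <= t -> forall rho : 'M[C]_2,
        P (tensmx rho (pi t)) = Phi t rho).

End QDefs.

(* Main.v *)
Require Import Defs.
From HB Require Import structures.
From mathcomp Require Import all_boot all_order all_algebra.
From mathcomp Require Import complex mxtens.
From mathcomp Require Import all_classical all_reals all_analysis.
From mathcomp Require Import ring lra.
Import Order.TTheory GRing.Theory Num.Theory.
Import numFieldNormedType.Exports.
Local Open Scope ring_scope.

Set Implicit Arguments. Unset Strict Implicit. Unset Printing Implicit Defensive.

Section Forms.
Variable C : numClosedFieldType.
Local Notation "x ^*" := (Num.conj x).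


Lemma cjM (x y : C) : (x * y)^* = x^* * y^*. Proof. exact: rmorphM. Qed.
Lemma cjD (x y : C) : (x + y)^* = x^* + y^*. Proof. exact: rmorphD. Qed.
Lemma cjN (x : C) : (- x)^* = - x^*. Proof. exact: rmorphN. Qed.
Lemma cjB (x y : C) : (x - y)^* = x^* - y^*. Proof. exact: rmorphB. Qed.
Lemma cjV (x : C) : (x^-1)^* = (x^*)^-1. Proof. exact: fmorphV. Qed.
Lemma cj1 : (1 : C)^* = 1. Proof. exact: rmorph1. Qed.
Lemma cjn k : (k%:R : C)^* = k%:R. Proof. exact: rmorph_nat. Qed.
Lemma cj_sum n (F : 'I_n -> C) : (\sum_i F i)^* = \sum_i (F i)^*.
Proof. exact: rmorph_sum. Qed.

Definition qf n (x : 'cV[C]_n) (M : 'M[C]_n) (y : 'cV[C]_n) : C :=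
  \sum_i \sum_j (x i 0)^* * M i j * y j 0.
Definition psdf n (M : 'M[C]_n) := forall v, 0 <= qf v M v.

Lemma sum_delta n (i : 'I_n) (F : 'I_n -> C) :
  \sum_k (k == i)%:R * F k = F i.
Proof.
rewrite (bigD1 i) //= eqxx mul1r big1 ?addr0 // => k /negbTE ->.
by rewrite mul0r.
Qed.

Lemma form_expand n (x y : 'cV[C]_n) M s :
  qf (x + s *: y) M (x + s *: y) =
  qf x M x + s * qf x M y + s^* * qf y M x + s^* * s * qf y M y.
Proof.
rewrite /qf !mulr_sumr -!big_split /=; apply: eq_bigr => i _.
rewrite !mulr_sumr -!big_split /=; apply: eq_bigr => j _.
rewrite !mxE rmorphD rmorphM /=. ring.
Qed.

Lemma ge0_conj (a : C) : 0 <= a -> a^* = a.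
Proof. by move=> h; apply: conj_Creal; apply: ger0_real. Qed.

Lemma psd_herm n (M : 'M[C]_n) x y : psdf M -> qf y M x = (qf x M y)^*.
Proof.
move=> hM.
have h1 := ge0_conj (hM (x + 1 *: y)).
have h2 := ge0_conj (hM (x + 'i *: y)).
rewrite form_expand in h1; rewrite form_expand in h2.
have px := ge0_conj (hM x); have py := ge0_conj (hM y).
move: h1 h2 px py.
set a := qf x M y; set b := qf y M x; set p := qf x M x; set q := qf y M y.
rewrite !rmorphD !rmorphM /= rmorph1 conjCi => e1 e2 px py.
rewrite ?conjCK in e1 e2.
have ci : Num.Num_conj__canonical__GRing_RMorphism C 'i = - 'i := conjCi C.
rewrite px py in e1 e2.
move: e1; rewrite !rmorph1 => e1.
rewrite !rmorphN in e2. move: e2; rewrite ci; move=> e2.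
have sq : 'i * 'i = -1 :> C by rewrite -expr2 sqrCi.
move/eqP: e1; rewrite -subr_eq0 => /eqP e1.
move/eqP: e2; rewrite -subr_eq0 => /eqP e2.
have E1 : a^* + b^* = a + b.
  apply/eqP; rewrite -subr_eq0; apply/eqP; rewrite -e1; ring.
have E2 : a^* - b^* = b - a.
  apply: (mulfI (neq0Ci C)); apply/eqP; rewrite -subr_eq0; apply/eqP.
  rewrite -[RHS]oppr0 -e2. rewrite !mulrN !mulNr sq. ring.
have e3 : b *+ 2 = a^* *+ 2.
  have -> : b *+ 2 = (a + b) + (b - a) by rewrite mulr2n; ring.
  rewrite -E1 -E2; rewrite mulr2n; ring.
have h2 : (2%:R : C) != 0 by rewrite pnatr_eq0.
by move: e3; rewrite -[b *+ 2]mulr_natr -[a^* *+ 2]mulr_natr => /(mulIf h2).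
Qed.

Lemma CS n (M : 'M[C]_n) x y : psdf M ->
  qf x M y * (qf x M y)^* <= qf x M x * qf y M y.
Proof.
move=> hM.
have hh := psd_herm x y hM.
set b := qf x M y; set a := qf x M x; set m := qf y M y.
have a0 : 0 <= a := hM x. have m0 : 0 <= m := hM y.
have ac := ge0_conj a0. have mc := ge0_conj m0.
have := hM (x + 1 *: y); rewrite form_expand => _.
have [m_eq0|m_gt0] := eqVneq m 0.
- rewrite m_eq0 mulr0.
  have [b_eq0|b_neq0] := eqVneq b 0.
    by rewrite b_eq0 mul0r.
  exfalso.
  pose s := - ((a + 1) / (2%:R * b)).
  have := hM (x + s *: y); rewrite form_expand -/a -/b -/m hh -/b m_eq0 mulr0 addr0.
  have sb : s * b = - ((a + 1) / 2%:R).
    rewrite /s; by field; rewrite ?b_neq0 ?pnatr_eq0.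
  have sb' : s^* * b^* = - ((a + 1) / 2%:R).
    have ac2 : Num.Num_conj__canonical__GRing_RMorphism C a = a := ac.
    by rewrite -rmorphM sb rmorphN fmorph_div rmorphD rmorph1 rmorph_nat ac2.
  rewrite sb sb'.
  have -> : a + - ((a + 1) / 2%:R) + - ((a + 1) / 2%:R) = -1.
    by field; rewrite ?pnatr_eq0.
  by rewrite oppr_ge0 ler10.
- have mpos : 0 < m by rewrite lt_def m_gt0 m0.
  pose s := - (b^* / m).
  have := hM (x + s *: y); rewrite form_expand -/a -/b -/m hh -/b.
  have -> : s^* = - (b / m).
    have mc2 : Num.Num_conj__canonical__GRing_RMorphism C m = m := mc.
    rewrite /s rmorphN fmorph_div mc2; congr (- (_ / _)); exact: conjCK.
  have -> : a + s * b + - (b / m) * b^* + - (b / m) * s * m = a - b * b^* / m.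
    by rewrite /s; field; rewrite ?m_gt0.
  rewrite subr_ge0 ler_pdivrMr //.
Qed.

Lemma form_delta_l n (M : 'M[C]_n) i y :
  qf (delta_mx i 0) M y = (M *m y) i 0.
Proof.
rewrite /qf [RHS]mxE.
transitivity (\sum_k (k == i)%:R * \sum_j M k j * y j 0).
  apply: eq_bigr => k _; rewrite mulr_sumr; apply: eq_bigr => j _.
  by rewrite mxE andbT rmorph_nat mulrA.
by rewrite sum_delta.
Qed.

Lemma psd_kernel n (M : 'M[C]_n) y : psdf M -> qf y M y = 0 -> M *m y = 0.
Proof.
move=> hM hy; apply/matrixP => i k; rewrite (ord1 k) [RHS]mxE.
have := CS (delta_mx i 0) y hM; rewrite hy mulr0 form_delta_l.
rewrite -normCK => h.
have : `|(M *m y) i 0| ^+ 2 = 0 by apply/eqP; rewrite eq_le h /= exprn_ge0.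
by move/eqP; rewrite sqrf_eq0 normr_eq0 => /eqP.
Qed.

Definition outer n (x y : 'cV[C]_n) : 'M[C]_n := \matrix_(i, j) (x i 0 * (y j 0)^*).

Lemma form_outer n (u x y v : 'cV[C]_n) :
  qf u (outer x y) v = (\sum_i (u i 0)^* * x i 0) * (\sum_j (y j 0)^* * v j 0).
Proof.
rewrite /qf mulr_suml; apply: eq_bigr => i _.
rewrite mulr_sumr; apply: eq_bigr => j _; rewrite mxE; ring.
Qed.

Lemma psd_outer n (x : 'cV[C]_n) : psdf (outer x x).
Proof.
move=> v; rewrite form_outer.
have -> : \sum_j (x j 0)^* * v j 0 = (\sum_i (v i 0)^* * x i 0)^*.
  by rewrite cj_sum; apply: eq_bigr => i _; rewrite cjM conjCK mulrC.
exact: mul_conjC_ge0.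
Qed.

Lemma formBM n (u v : 'cV[C]_n) (A B : 'M[C]_n) (c : C) :
  qf u (c *: A - B) v = c * qf u A v - qf u B v.
Proof.
rewrite /qf mulr_sumr -sumrB; apply: eq_bigr => i _.
rewrite mulr_sumr -sumrB; apply: eq_bigr => j _; rewrite !mxE; ring.
Qed.

Lemma psd_reduce n (pi : 'M[C]_n) j : psdf pi ->
  psdf (pi j j *: pi - outer (\col_i pi i j) (\col_i pi i j)).
Proof.
move=> hp v; rewrite formBM form_outer.
have e1 : \sum_i (v i 0)^* * (\col_i0 pi i0 j) i 0 = qf v pi (delta_mx j 0).
  rewrite /qf; apply: eq_bigr => i _; rewrite mxE.
  under eq_bigr => k _ do rewrite mxE andbT mulrC.
  by rewrite (sum_delta j (fun k => (v i 0)^* * pi i k)).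
have e2 : \sum_i ((\col_i0 pi i0 j) i 0)^* * v i 0 = (qf v pi (delta_mx j 0))^*.
  by rewrite -e1 cj_sum; apply: eq_bigr => i _; rewrite cjM conjCK mulrC.
rewrite e1 e2 subr_ge0.
have := CS v (delta_mx j 0) hp.
have -> : qf (delta_mx j 0) pi (delta_mx j 0) = pi j j.
  by rewrite form_delta_l mxE (bigD1 j) //= mxE !eqxx mulr1 big1 ?addr0 // => k /negbTE hk; rewrite mxE hk mulr0.
by rewrite [pi j j * _]mulrC.
Qed.

End Forms.

Set Implicit Arguments. Unset Strict Implicit. Unset Printing Implicit Defensive.

Section PB.
Variable R : realType.
Local Notation C := (complex R).
Local Notation "x ^*" := (Num.conj x).

Lemma adj_form n (x : 'cV[C]_n) M y : (adjmx x *m M *m y) 0 0 = qf x M y.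
Proof.
rewrite /qf mxE.
under eq_bigr => j _ do rewrite mxE mulr_suml.
by rewrite exchange_big; apply: eq_bigr => i _; apply: eq_bigr => j _; rewrite !mxE.
Qed.

Lemma psdmxE n (M : 'M[C]_n) : psdmx M <-> psdf M.
Proof. by split => h v; have := h v; rewrite adj_form. Qed.

Lemma sum_tens m n (F : 'I_(m * n) -> C) :
  \sum_p F p = \sum_i \sum_j F (mxtens_index (i, j)).
Proof.
rewrite pair_big /=.
rewrite (reindex (@mxtens_index m n)) /=; last first.
  by exists (@mxtens_unindex m n) => x _; rewrite (mxtens_indexK, mxtens_unindexK).
by apply: eq_bigr => -[i j].
Qed.

Definition sel n (a : 'I_2) (u : 'cV[C]_(2 * n)) : 'cV[C]_n :=
  \col_i u (mxtens_index (a, i)) 0.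

Lemma form_tens n (a b : 'I_2) (u v : 'cV[C]_(2 * n)) (M : 'M[C]_n) :
  qf u (tensmx (delta_mx a b) M) v = qf (sel a u) M (sel b v).
Proof.
rewrite /qf sum_tens.
transitivity (\sum_i1 (i1 == a)%:R * \sum_i2 \sum_j1 (j1 == b)%:R * \sum_j2
   (u (mxtens_index (i1, i2)) 0)^* * M i2 j2 * v (mxtens_index (j1, j2)) 0).
  apply: eq_bigr => i1 _; rewrite mulr_sumr; apply: eq_bigr => i2 _.
  rewrite sum_tens mulr_sumr; apply: eq_bigr => j1 _.
  rewrite !mulr_sumr; apply: eq_bigr => j2 _.
  rewrite tensmxE mxE.
  by case: (i1 == a); case: (j1 == b); rewrite /= ?mul1r ?mul0r ?mulr0 ?mulr1 ?mul0r.
rewrite sum_delta; apply: eq_bigr => i2 _.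
rewrite (sum_delta b (fun j1 => \sum_j2 (u (mxtens_index (a, i2)) 0)^* * M i2 j2 * v (mxtens_index (j1, j2)) 0)).
by apply: eq_bigr => j2 _; rewrite !mxE.
Qed.

Lemma form_addl n (x y z : 'cV[C]_n) M : qf (x + y) M z = qf x M z + qf y M z.
Proof.
rewrite /qf -big_split; apply: eq_bigr => i _; rewrite -big_split; apply: eq_bigr => j _.
rewrite !mxE cjD /=; ring.
Qed.

Lemma form_addr n (x y z : 'cV[C]_n) M : qf z M (x + y) = qf z M x + qf z M y.
Proof.
rewrite /qf -big_split; apply: eq_bigr => i _; rewrite -big_split; apply: eq_bigr => j _.
rewrite !mxE /=; ring.
Qed.

Lemma block_psd_tens n (X : 'M[C]_n) : psdf X ->
  block_psd (fun a b : 'I_2 => tensmx (delta_mx a b) X).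
Proof.
move=> hX v.
under eq_bigr => a _ do under eq_bigr => b _ do rewrite adj_form form_tens.
rewrite !big_ord_recl !big_ord0 !addr0.
have := hX (sel ord0 (v ord0) + sel (lift ord0 ord0) (v (lift ord0 ord0))).
by rewrite !form_addl !form_addr !addrA.
Qed.

Lemma dot_conj n (x z : 'cV[C]_n) :
  \sum_j (x j 0)^* * z j 0 = (\sum_i (z i 0)^* * x i 0)^*.
Proof. by rewrite cj_sum; apply: eq_bigr => i _; rewrite cjM conjCK mulrC. Qed.

Lemma block_psd_outer n (x : 'I_2 -> 'cV[C]_n) :
  block_psd (fun a b : 'I_2 => tensmx (delta_mx a b) (outer (x a) (x b))).
Proof.
move=> v.
under eq_bigr => a _ do under eq_bigr => b _ do rewrite adj_form form_tens form_outer.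
rewrite !big_ord_recl !big_ord0 !addr0.
rewrite !(dot_conj (x _)).
set p := \sum_i _ * x ord0 i 0. set q := \sum_i _ * x (lift ord0 ord0) i 0.
have -> : p * p^* + p * q^* + (q * p^* + q * q^*) = (p + q) * (p + q)^* by rewrite cjD; ring.
exact: mul_conjC_ge0.
Qed.

Lemma qf_delta2 n (M : 'M[C]_n) (al be : C) i j :
  qf (al *: delta_mx i 0) M (be *: delta_mx j 0) = al^* * M i j * be.
Proof.
rewrite /qf.
transitivity (\sum_k (k == i)%:R * \sum_l (l == j)%:R * (al^* * M k l * be)).
  apply: eq_bigr => k _; rewrite mulr_sumr; apply: eq_bigr => l _.
  rewrite !mxE !andbT cjM cjn.
  by case: (k == i); case: (l == j); rewrite /= ?mul1r ?mul0r ?mulr0 ?mulr1 ?mul0r.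
by rewrite sum_delta sum_delta.
Qed.

Lemma cj0 : (0 : C)^* = 0. Proof. exact: rmorph0. Qed.

Lemma I2_0 : ord0 = (0 : 'I_2). Proof. exact: val_inj. Qed.
Lemma I2_1 : lift ord0 ord0 = (1 : 'I_2). Proof. exact: val_inj. Qed.

Section WithP.
Variables (d : nat) (P : 'M[C]_(2 * d) -> 'M[C]_2).

Definition T (a b : 'I_2) (X : 'M[C]_d) := P (tensmx (delta_mx a b) X).

Lemma tensD m n p q (A : 'M[C]_(m, n)) (X Y : 'M[C]_(p, q)) :
  tensmx A (X + Y) = tensmx A X + tensmx A Y.
Proof. by apply/matrixP => i j; rewrite !mxE mulrDr. Qed.

Lemma tensZ m n p q (A : 'M[C]_(m, n)) (c : C) (X : 'M[C]_(p, q)) :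
  tensmx A (c *: X) = c *: tensmx A X.
Proof. by apply/matrixP => i j; rewrite !mxE mulrCA. Qed.

Lemma PD (hl : linear P) A B : P (A + B) = P A + P B.
Proof. by have := hl 1 A B; rewrite !scale1r. Qed.

Lemma P0 (hl : linear P) : P 0 = 0.
Proof. have := PD hl 0 0; rewrite addr0 => h. by apply: (addrI (P 0)); rewrite -h addr0. Qed.

Lemma PZ (hl : linear P) c A : P (c *: A) = c *: P A.
Proof. by have := hl c A 0; rewrite !addr0 P0 // addr0. Qed.

Lemma lin_expand (g : 'M[C]_d -> C) :
  (forall X Y, g (X + Y) = g X + g Y) -> (forall c X, g (c *: X) = c * g X) ->
  forall X, g X = \sum_i \sum_j X i j * g (delta_mx i j).
Proof.
move=> gD gZ X.
have g0 : g 0 = 0 by rewrite -(scale0r (0 : 'M[C]_d)) gZ mul0r.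
rewrite {1}(matrix_sum_delta X) (big_morph g gD g0); apply: eq_bigr => i _.
by rewrite (big_morph g gD g0); apply: eq_bigr => j _; rewrite gZ.
Qed.

Lemma T_D (hl : linear P) a b k l X Y : T a b (X + Y) k l = T a b X k l + T a b Y k l.
Proof. by rewrite /T tensD PD // mxE. Qed.

Lemma T_Z (hl : linear P) a b k l c X : T a b (c *: X) k l = c * T a b X k l.
Proof. by rewrite /T tensZ PZ // mxE. Qed.

Lemma T_expand (hl : linear P) a b k l X :
  T a b X k l = \sum_i \sum_j X i j * T a b (delta_mx i j) k l.
Proof.
exact: (@lin_expand (fun Y => T a b Y k l) (fun Y Z => T_D hl a b k l Y Z) (fun c Y => T_Z hl a b k l c Y) X).
Qed.

Lemma cp_scal (hcp : completely_positive P) X (hX : psdf X) (al0 al1 : C) (i0 i1 : 'I_2) :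
  0 <= al0^* * T 0 0 X i0 i0 * al0 + al0^* * T 0 1 X i0 i1 * al1
     + (al1^* * T 1 0 X i1 i0 * al0 + al1^* * T 1 1 X i1 i1 * al1).
Proof.
have := hcp 2 _ (block_psd_tens hX)
  (fun a => if a == 0 then al0 *: delta_mx i0 0 else al1 *: delta_mx i1 0).
under eq_bigr => a _ do under eq_bigr => b _ do rewrite adj_form.
rewrite !big_ord_recl !big_ord0 !addr0 /=.
by rewrite !qf_delta2.
Qed.


Lemma cp_outer (hcp : completely_positive P) (x : 'I_2 -> 'cV[C]_d) :
  0 <= T 0 0 (outer (x 0) (x 0)) 0 0 + T 0 1 (outer (x 0) (x 1)) 0 1
     + (T 1 0 (outer (x 1) (x 0)) 1 0 + T 1 1 (outer (x 1) (x 1)) 1 1).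
Proof.
have := hcp 2 _ (block_psd_outer x) (fun a => 1 *: delta_mx a 0).
under eq_bigr => a _ do under eq_bigr => b _ do rewrite adj_form qf_delta2 cj1 mul1r mulr1.
by rewrite !big_ord_recl !big_ord0 !addr0 /= I2_1 I2_0.
Qed.

Lemma T_B (hl : linear P) a b k l X Y : T a b (X - Y) k l = T a b X k l - T a b Y k l.
Proof. by rewrite T_D // -scaleN1r T_Z // mulN1r. Qed.

Lemma T_tp (htp : trace_preserving P) i j :
  T 0 0 (delta_mx i j) 0 0 + T 0 0 (delta_mx i j) 1 1 = (i == j)%:R.
Proof.
have := htp (tensmx (delta_mx 0 0) (delta_mx i j)).
rewrite /mxtrace big_ord_recl big_ord1 /= I2_1 I2_0 => ->.
rewrite sum_tens.
under eq_bigr => a _ do under eq_bigr => k _ do rewrite tensmxE.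
transitivity (\sum_(a < 2) (a == 0 :> 'I_2)%:R * \sum_(k < d) (k == i)%:R * ((k == j)%:R : C)).
  apply: eq_bigr => a _; rewrite mulr_sumr; apply: eq_bigr => k _.
  by rewrite !mxE andbb -mulnb natrM.
by rewrite sum_delta (sum_delta i (fun k => (k == j)%:R)).
Qed.

Lemma qf_matrix (g : 'M[C]_d -> C) (v : 'cV[C]_d) :
  qf v (\matrix_(i, j) g (delta_mx i j)) v =
  \sum_i \sum_j outer (\col_k (v k 0)^*) (\col_k (v k 0)^*) i j * g (delta_mx i j).
Proof.
rewrite /qf; apply: eq_bigr => i _; apply: eq_bigr => j _.
by rewrite !mxE conjCK; ring.
Qed.

Definition un (p : 'I_(2 * d)) := mxtens_unindex p.
Definition Hm : 'M[C]_(2 * d) := \matrix_(p, q)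
  T (un p).1 (un q).1 (delta_mx (un p).2 (un q).2) (un p).1 (un q).1.
Definition xsel (y : 'cV[C]_(2 * d)) (a : 'I_2) : 'cV[C]_d :=
  \col_i (y (mxtens_index (a, i)) 0)^*.

Lemma Hm_form (hl : linear P) y :
  qf y Hm y = \sum_(a < 2) \sum_(b < 2) T a b (outer (xsel y a) (xsel y b)) a b.
Proof.
rewrite /qf sum_tens; apply: eq_bigr => a _.
under eq_bigr => i _ do rewrite sum_tens.
rewrite exchange_big; apply: eq_bigr => b _.
rewrite T_expand //; apply: eq_bigr => i _; apply: eq_bigr => j _.
by rewrite !mxE /un !mxtens_indexK /= conjCK; ring.
Qed.

Lemma psd_Hm (hl : linear P) (hcp : completely_positive P) : psdf Hm.
Proof.
move=> y; rewrite Hm_form //.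
rewrite !big_ord_recl !big_ord0 !addr0 /= I2_1 I2_0.
by have := cp_outer hcp (xsel y); rewrite addrA.
Qed.

Lemma Hm_row (y : 'cV[C]_(2 * d)) i :
  (Hm *m y) (mxtens_index (0, i)) 0 =
  \sum_(b < 2) \sum_j T 0 b (delta_mx i j) 0 b * y (mxtens_index (b, j)) 0.
Proof.
rewrite mxE sum_tens; apply: eq_bigr => b _; apply: eq_bigr => j _.
by rewrite !mxE /un !mxtens_indexK.
Qed.

Definition Zm : 'M[C]_d := \matrix_(i, j) T 0 1 (delta_mx i j) 0 1.
Definition Fm : 'M[C]_d := \matrix_(i, j) T 0 0 (delta_mx i j) 1 1.

Lemma key (hl : linear P) (hcp : completely_positive P) (htp : trace_preserving P)
  (pi : 'M[C]_d) (hpsd : psdf pi) (htr : \tr pi = 1) (c : C) (hc : c^* = c)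
  (e1 : T 0 0 pi 1 1 = 0) (e2 : T 0 0 pi 0 0 = 1) (e3 : T 0 1 pi 0 1 = c)
  (e4 : T 1 0 pi 1 0 = c) (e5 : T 1 1 pi 1 1 = c * c) :
  exists2 u : 'cV[C]_d, u != 0 & Zm *m u = c *: u.
Proof.
have [j hj] : exists j, pi j j != 0.
  case: (pickP (fun j => pi j j != 0)) => [j hj|h]; first by exists j.
  exfalso; move: htr; rewrite /mxtrace big1 => [|k _]; last by have := h k => /negbFE /eqP.
  by move/eqP; rewrite eq_sym oner_eq0.
set m := pi j j.
have m0 : 0 <= m.
  by have := hpsd (1 *: delta_mx j 0); rewrite qf_delta2 cj1 mul1r mulr1.
set w := \col_i pi i j.
have hY := psd_reduce j hpsd; rewrite -/m -/w in hY.
set Y := m *: pi - outer w w in hY.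
have hO := psd_outer w.
have fO : T 0 0 (outer w w) 1 1 = 0.
  have fY : T 0 0 Y 1 1 = - T 0 0 (outer w w) 1 1 by rewrite /Y T_B // T_Z // e1 mulr0 sub0r.
  have := cp_scal hcp hY 1 0 1 1; rewrite cj1 cj0 !mulr0 !mul0r !addr0 mul1r mulr1 fY oppr_ge0.
  have := cp_scal hcp hO 1 0 1 1; rewrite cj1 cj0 !mulr0 !mul0r !addr0 mul1r mulr1.
  by move=> h1 h2; apply/eqP; rewrite eq_le h1 h2.
pose hf X := c^* * T 0 0 X 0 0 * c + c^* * T 0 1 X 0 1 * (-1)
   + ((-1)^* * T 1 0 X 1 0 * c + (-1)^* * T 1 1 X 1 1 * (-1)).
have hpi : hf pi = 0 by rewrite /hf e2 e3 e4 e5 hc cjN cj1; ring.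
have hYe : hf Y = m * hf pi - hf (outer w w) by rewrite /hf /Y !T_B // !T_Z //; ring.
have hO0 : hf (outer w w) = 0.
  have h1 := cp_scal hcp hY c (-1) 0 1.
  have h2 := cp_scal hcp hO c (-1) 0 1.
  rewrite -/(hf Y) hYe hpi mulr0 sub0r oppr_ge0 in h1.
  by apply/eqP; rewrite eq_le h1 h2.
set u := \col_i (w i 0)^*.
have uw : \col_k (u k 0)^* = w by apply/matrixP => i k; rewrite (ord1 k) !mxE conjCK.
have u0 : u != 0.
  apply/eqP => h; have := congr1 (fun M : 'cV[C]_d => M j 0) h.
  by rewrite !mxE => /eqP; rewrite -[_ == 0](inj_eq (can_inj (@conjCK _))) cj0 conjCK (negbTE hj).
have psdF : psdf Fm.
  move=> v; rewrite /Fm (qf_matrix (fun X => T 0 0 X 1 1)) -T_expand //.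
  have := cp_scal hcp (psd_outer (\col_k (v k 0)^*)) 1 0 1 1.
  by rewrite cj1 cj0 !mulr0 !mul0r !addr0 mul1r mulr1.
have kerF : Fm *m u = 0.
  apply: psd_kernel psdF _.
  by rewrite /Fm (qf_matrix (fun X => T 0 0 X 1 1)) -T_expand // uw.
pose co (a : 'I_2) : C := if a == 0 then c else -1.
have coc a : (co a)^* = co a by rewrite /co; case: (a == 0); rewrite ?hc ?cjN ?cj1.
set yv := \col_p (co (un p).1 * u (un p).2 0).
have xs a : xsel yv a = co a *: w.
  by apply/matrixP => i k; rewrite (ord1 k) !mxE /un mxtens_indexK /= cjM coc conjCK.
have outZ (al be : C) : outer (al *: w) (be *: w) = (al * be^*) *: outer w w.
  by apply/matrixP => i k; rewrite !mxE cjM; ring.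
have kerH : Hm *m yv = 0.
  apply: psd_kernel (psd_Hm hl hcp) _.
  rewrite Hm_form // !big_ord_recl !big_ord0 !addr0 /= I2_1 I2_0 !xs !outZ !T_Z //.
  by rewrite !coc /co /= -hO0 /hf hc cjN cj1; ring.
exists u => //; apply/matrixP => i k; rewrite (ord1 k).
have rowH := congr1 (fun M : 'cV[C]_(2 * d) => M (mxtens_index (0, i)) 0) kerH.
rewrite /= Hm_row mxE big_ord_recl big_ord1 /= I2_1 I2_0 in rowH.
have rowF := congr1 (fun M : 'cV[C]_d => M i 0) kerF.
rewrite /= !mxE in rowF.
have eF : \sum_l T 0 0 (delta_mx i l) 0 0 * u l 0 = u i 0.
  transitivity (\sum_l ((i == l)%:R * u l 0 - Fm i l * u l 0)).
    by apply: eq_bigr => l _; rewrite [Fm i l]mxE -(T_tp htp i l); ring.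
  rewrite sumrB rowF subr0.
  under eq_bigr => l _ do rewrite eq_sym.
  exact: sum_delta.
have r1 : \sum_l T 0 0 (delta_mx i l) 0 0 * yv (mxtens_index (0, l)) 0
          = c * \sum_l T 0 0 (delta_mx i l) 0 0 * u l 0.
  by rewrite mulr_sumr; apply: eq_bigr => l _; rewrite mxE /un mxtens_indexK /co /=; ring.
have r2 : \sum_l T 0 1 (delta_mx i l) 0 1 * yv (mxtens_index (1, l)) 0
          = - \sum_l Zm i l * u l 0.
  by rewrite -sumrN; apply: eq_bigr => l _; rewrite !mxE /un mxtens_indexK /co /=; ring.
rewrite r1 r2 eF in rowH.
by rewrite [RHS]mxE [LHS]mxE (subr0_eq rowH).
Qed.
End WithP.
End PB.

Unset Implicit Arguments.


Section ODE.
Variable R : realType.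

Lemma ode_exp (f : R -> R) (k : R) :
  (forall t : R, is_derive t (1 : R) f (k * f t)) -> forall t, f t = f 0 * expR (k * t).
Proof.
move=> hf t.
pose g s := f s * expR (- (k * s)).
have hg : forall s, is_derive s (1:R) g 0.
  move=> s.
  have h1 := hf s.
  have h2 : is_derive s (1:R) (fun s => expR (- (k * s))) (expR (- (k * s)) * (- k)).
    by apply: trigger_derive; rewrite /GRing.scale /= mulr1.
  by rewrite /g; apply: trigger_derive; rewrite /GRing.scale /=; ring.
have := @is_derive_0_is_cst _ g t 0 hg; rewrite /g mulr0 oppr0 expR0 mulr1 => <-.
by rewrite -mulrA -expRD addNr expR0 mulr1.
Qed.
End ODE.


Section E.
Variable R : realType.
Local Notation C := (complex R).
Local Notation "x ^*" := (Num.conj x).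

Lemma L_entries (g : R) (hg : 0 <= g) (rho : 'M[C]_2) :
  [/\ ad_lindbladian g rho 0 0 = (g%:C)%C * rho 1 1,
      ad_lindbladian g rho 1 1 = - (g%:C)%C * rho 1 1,
      ad_lindbladian g rho 0 1 = - (2^-1 * (g%:C)%C) * rho 0 1 &
      ad_lindbladian g rho 1 0 = - (2^-1 * (g%:C)%C) * rho 1 0].
Proof.
set s := ((Num.sqrt g)%:C)%C.
have sc : s^* = s by rewrite /s; apply/eqP; rewrite eq_complex /= oppr0 !eqxx.
have ss : (g%:C)%C = s * s by rewrite /s -rmorphM /= -expr2 sqr_sqrtr.
rewrite /ad_lindbladian /lindblad1 /ad_jump /adjmx -/s ss.
split; rewrite !mxE !big_ord_recl !big_ord0 /= !mxE !big_ord_recl !big_ord0 /= !mxE /=;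
  rewrite ?I2_1 ?I2_0 !cjM cj0 cj1 sc; rewrite !(mulr0, mul0r, addr0, add0r, mulr1, subr0, sub0r); by field.
Qed.

Lemma ReM_real (k : R) (z : C) : complex.Re ((k%:C)%C * z) = k * complex.Re z.
Proof. by case: z => a b /=; ring. Qed.
Lemma ImM_real (k : R) (z : C) : complex.Im ((k%:C)%C * z) = k * complex.Im z.
Proof. by case: z => a b /=; ring. Qed.

Lemma phi_entry (L : 'M[C]_2 -> 'M[C]_2) Phi (hgen : generated_by L Phi) rho i j (k : R)
  (hL : forall t, L (Phi t rho) i j = (k%:C)%C * Phi t rho i j) t :
  Phi t rho i j = ((expR (k * t))%:C)%C * rho i j.
Proof.
case: hgen => h0 hd.
have hre : forall s : R, is_derive s (1 : R) (fun s => complex.Re (Phi s rho i j)) (k * complex.Re (Phi s rho i j)).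
  by move=> s; have [h _] := hd rho s i j; rewrite hL ReM_real in h.
have him : forall s : R, is_derive s (1 : R) (fun s => complex.Im (Phi s rho i j)) (k * complex.Im (Phi s rho i j)).
  by move=> s; have [_ h] := hd rho s i j; rewrite hL ImM_real in h.
have e1 := @ode_exp R _ _ hre t; have e2 := @ode_exp R _ _ him t.
rewrite /= h0 in e1 e2.
move: e1 e2; case: (Phi t rho i j) => a b /= -> ->.
case: (rho i j) => x y /=; apply/eqP; rewrite eq_complex /=; apply/andP; split; apply/eqP; ring.
Qed.

Lemma phi_vals (g : R) (hg : 0 < g) Phi (hgen : generated_by (ad_lindbladian g) Phi) t :
  [/\ Phi t (delta_mx 0 0) 1 1 = 0, Phi t (delta_mx 0 0) 0 0 = 1,
      Phi t (delta_mx 0 1) 0 1 = ((expR (- (g / 2) * t))%:C)%C,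
      Phi t (delta_mx 1 0) 1 0 = ((expR (- (g / 2) * t))%:C)%C &
      Phi t (delta_mx 1 1) 1 1 = ((expR (- (g / 2) * t))%:C)%C * ((expR (- (g / 2) * t))%:C)%C].
Proof.
have Le z := L_entries g (ltW hg) z.
have hN : forall z : C, - ((g%:C)%C) * z = (((- g)%:C)%C) * z by move=> z; rewrite rmorphN.
have hH : forall z : C, - (2^-1 * (g%:C)%C) * z = (((- (g / 2))%:C)%C) * z.
  by move=> z; rewrite rmorphN rmorphM fmorphV rmorph_nat [_ * 2^-1]mulrC.
have a : forall t, Phi t (delta_mx 0 0) 1 1 = 0.
  move=> s; rewrite (@phi_entry _ _ hgen _ _ _ (- g)) ?mxE ?mulr0 // => u.
  by have [_ -> _ _] := Le (Phi u (delta_mx 0 0)); rewrite hN.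
split.
- exact: a.
- rewrite (@phi_entry _ _ hgen _ _ _ 0) ?mxE ?mul0r ?expR0 ?mulr1 // => u.
  by have [-> _ _ _] := Le (Phi u (delta_mx 0 0)); rewrite a mulr0 mul0r.
- rewrite (@phi_entry _ _ hgen _ _ _ (- (g / 2))) ?mxE ?mulr1 // => u.
  by have [_ _ -> _] := Le (Phi u (delta_mx 0 1)); rewrite hH.
- rewrite (@phi_entry _ _ hgen _ _ _ (- (g / 2))) ?mxE ?mulr1 // => u.
  by have [_ _ _ ->] := Le (Phi u (delta_mx 1 0)); rewrite hH.
- rewrite (@phi_entry _ _ hgen _ _ _ (- g)) ?mxE ?mulr1.
    by rewrite -rmorphM -expRD; congr ((expR _)%:C)%C; field.
  by move=> u; have [_ -> _ _] := Le (Phi u (delta_mx 1 1)); rewrite hN.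
Qed.
End E.


Theorem proposition2 (R : realType) (gamma : R) (hgamma : 0 < gamma)
    (Phi : R -> 'M[complex R]_2 -> 'M[complex R]_2) :
  generated_by (ad_lindbladian gamma) Phi ->
  ~ quantum_programmable Phi.
Proof.
move=> hgen [d [P [pi [[hl [hcp htp]] [hdens [_ hprog]]]]]].
pose cf := fun t : R => ((expR (- (gamma / 2) * t))%:C)%C.
have eig : forall k : nat, eigenvalue (Zm P)^T (cf k%:R).
  move=> k; pose t : R := k%:R.
  have ht : 0 <= t by rewrite /t ler0n.
  have [hpsd htr] := hdens t ht.
  have [v1 v2 v3 v4 v5] := @phi_vals R gamma hgamma Phi hgen t.
  have eT : forall a b, T P a b (pi t) = Phi t (delta_mx a b).
    by move=> a b; rewrite /T hprog.
  have hc : Num.conj (cf t) = cf t.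
    by rewrite /cf; apply/eqP; rewrite eq_complex /= oppr0 !eqxx.
  have e1 : T P 0 0 (pi t) 1 1 = 0 by rewrite eT v1.
  have e2 : T P 0 0 (pi t) 0 0 = 1 by rewrite eT v2.
  have e3 : T P 0 1 (pi t) 0 1 = cf t by rewrite eT v3.
  have e4 : T P 1 0 (pi t) 1 0 = cf t by rewrite eT v4.
  have e5 : T P 1 1 (pi t) 1 1 = cf t * cf t by rewrite eT v5.
  have [u u0 hu] := key hl hcp htp (proj1 (psdmxE _) hpsd) htr hc e1 e2 e3 e4 e5.
  apply/eigenvalueP; exists u^T; last by rewrite trmx_eq0.
  by rewrite -trmx_mul hu linearZ.
have inj : injective (fun k : nat => cf k%:R).
  have hne : - (gamma / 2) != 0.
    by rewrite oppr_eq0 mulf_neq0 ?invr_eq0 ?pnatr_eq0 ?gt_eqF.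
  move=> a b /= /(congr1 (@complex.Re R)) /= /expR_inj /(mulfI hne) /eqP.
  by rewrite eqr_nat => /eqP.
have := @max_poly_roots _ (char_poly (Zm P)^T) [seq cf k%:R | k <- iota 0 d.+1].
rewrite size_map size_iota size_char_poly ltnn.
move=> h; suff : false by []. apply: h.
- exact: monic_neq0 (char_poly_monic _).
- by apply/allP => x /mapP [k _ ->]; rewrite -eigenvalue_root_char.
- by rewrite map_inj_uniq ?iota_uniq.
Qed.
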